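(* Let $\alpha,\beta\in[0,r]\cap A$ with $\alpha<\beta$, and $I=(\alpha,\beta)$. Let $x\in\mathbf F_I$ with $\mathrm{fix}(x)\cap I\cap A=\varnothing$, and let $C$ be the centralizer of $x$ in $\mathbf F_I$. Let $\phi\colon\mathbf F_I\to\Lambda$ be $y\mapsto(\alpha)y'^{+}$. Then $\phi$ is a group homomorphism and its restriction to $C$ is injective. The same holds for $\phi\colon\mathbf F_I\to\Lambda$, $y\mapsto(\beta)y'^{-}$.
   Context: Maps act on the right. Fix real $r>0$, a subgroup $\Lambda\neq\{1\}$ of $\mathbb R^*_+$, and an additive subgroup $A\subseteq\mathbb R$ with $r\in A$ and $\lambda A\subseteq A$ for $\lambda\in\Lambda$. $\mathbf F=\mathbf F(r,\Lambda,A)$ is the group of homeomorphisms $x\colon[0,r)\to[0,r)$ that are piecewise affine with finitely many breakpoints, all slopes in $\Lambda$, and all breakpoints and their images in $A$; each extends uniquely to a homeomorphism of $[0,r]$. For a permutation $x$, $\mathrm{fix}(x)$ is its fixed point set and $\mathrm{supp}(x)$ its complement. For $S\subseteq[0,r)$, $\mathbf F_S=\{x\in\mathbf F\mid\mathrm{supp}(x)\subseteq S\}$. For a map $g$ affine on an open interval $(\gamma,\delta)$, $(\gamma)g'^{+}$ and $(\delta)g'^{-}$ denote the slope of $g$ there (at $r$ one uses the extension to $[0,r]$). *)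

(* Defs.v *)
From Stdlib Require Import Reals.
Open Scope R_scope.

Definition pos_mult_subgroup (Lam : R -> Prop) : Prop :=
  (forall l, Lam l -> 0 < l) /\ Lam 1 /\
  (forall l m, Lam l -> Lam m -> Lam (l * m)) /\
  (forall l, Lam l -> Lam (/ l)).

Definition add_subgroup (A : R -> Prop) : Prop :=
  A 0 /\ (forall a b, A a -> A b -> A (a + b)) /\ (forall a, A a -> A (- a)).

Definition F_params (r : R) (Lam A : R -> Prop) : Prop :=
  0 < r /\ pos_mult_subgroup Lam /\ (exists l, Lam l /\ l <> 1) /\
  add_subgroup A /\ A r /\ (forall l a, Lam l -> A a -> A (l * a)).

(* x : R -> R represents an element of F(r,Lam,A): its restriction to [0,r)
   is a homeomorphism of [0,r) onto itself which is piecewise affine with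
   finitely many breakpoints, slopes in Lam, breakpoints and their images in A.
   The breakpoints are among the subdivision points 0 = t 0 < ... < t n = r;
   x is affine on each closed piece [t i, t (i+1)] (so the value x r is the
   value of the unique extension to [0,r]). *)
Definition inF (r : R) (Lam A : R -> Prop) (x : R -> R) : Prop :=
  (exists (n : nat) (t : nat -> R),
      t 0%nat = 0 /\ t n = r /\
      (forall i, (i < n)%nat -> t i < t (S i)) /\
      (forall i, (i <= n)%nat -> A (t i) /\ A (x (t i))) /\
      (forall i, (i < n)%nat -> exists l, Lam l /\
          forall s, t i <= s <= t (S i) -> x s = x (t i) + l * (s - t i))) /\
  (forall s, 0 <= s < r -> 0 <= x s < r) /\
  (forall s u, 0 <= s < r -> 0 <= u < r -> x s = x u -> s = u) /\
  (forall y, 0 <= y < r -> exists s, 0 <= s < r /\ x s = y).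

Definition F_eq (r : R) (x y : R -> R) : Prop :=
  forall s, 0 <= s < r -> x s = y s.

(* Right action: (t)(xy) = ((t)x)y, so the product xy is  y o x. *)
Definition F_mul (x y : R -> R) : R -> R := fun t => y (x t).

Definition inF_S (r : R) (Lam A : R -> Prop) (S : R -> Prop) (x : R -> R) : Prop :=
  inF r Lam A x /\ (forall t, 0 <= t < r -> x t <> t -> S t).

Definition open_int (a b : R) : R -> Prop := fun t => a < t < b.

Definition rslope (g : R -> R) (a l : R) : Prop :=
  exists eps c, 0 < eps /\ forall s, a < s < a + eps -> g s = c + l * s.

Definition lslope (g : R -> R) (b l : R) : Prop :=
  exists eps c, 0 < eps /\ forall s, b - eps < s < b -> g s = c + l * s.

(* Main.v *)
Require Import Defs.
From Stdlib Require Import Reals Lra Lia Classical.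
Open Scope R_scope.

Lemma aff2 a1 m1 a2 m2 s1 s2 : s1 < s2 -> a1 + m1*s1 = a2 + m2*s1 -> a1 + m1*s2 = a2 + m2*s2 -> m1 = m2 /\ a1 = a2.
Proof. intros H E1 E2.
assert (Hm : (m1 - m2) * (s2 - s1) = 0).
{ replace ((m1 - m2) * (s2 - s1)) with ((a1 + m1*s2 - (a2 + m2*s2)) - (a1 + m1*s1 - (a2 + m2*s1))) by ring.
  rewrite E1, E2. ring. }
destruct (Rmult_integral _ _ Hm) as [H1|H1]; [|lra].
assert (m1 = m2) by lra. subst. split; [reflexivity| lra]. Qed.

Lemma core (a b : R) (x y z : R -> R) (B : R -> Prop) :
  a < b ->
  (forall s u, a <= s -> s < u -> u <= b -> x s < x u) ->
  x a = a -> x b = b ->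
  (forall v, a <= v <= b -> exists u, a <= u <= b /\ x u = v) ->
  (forall s, a < s < b -> (y s = z s <-> y (x s) = z (x s))) ->
  (forall q, a < q < b -> B q -> x q <> q) ->
  (forall q, a < q < b -> B q \/ exists d a1 m1 a2 m2, 0 < d /\
       forall s, q - d < s < q + d -> y s = a1 + m1 * s /\ z s = a2 + m2 * s) ->
  (forall q, a < q < b -> exists d l, 0 < d /\ 0 < l /\
       forall s, q <= s <= q + d -> x s = x q + l * (s - q)) ->
  (exists e, 0 < e /\ forall s, a < s < a + e -> y s = z s) ->
  forall s, a < s < b -> y s = z s.
Proof.
  intros Hab Hmono Hxa Hxb Honto Hinv HB Hloc Hxr [e [He Hinit]].
  set (P := fun u => a < u <= b /\ forall s, a < s < u -> y s = z s).
  assert (HPb : bound P) by (exists b; intros u [Hu _]; lra).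
  assert (HPm : P (Rmin (a+e) b)).
  { split; [split; [apply Rmin_glb_lt; lra | apply Rmin_r] |].
    intros s Hs; apply Hinit; pose proof (Rmin_l (a+e) b); lra. }
  destruct (completeness P HPb (ex_intro _ _ HPm)) as [q [Hub Hlub]].
  assert (Hbelow : forall s, a < s < q -> y s = z s).
  { intros s Hs. destruct (classic (exists u, P u /\ s < u)) as [[u [[Hu Hu2] Hsu]]|Hn].
    - apply Hu2; lra.
    - exfalso. assert (q <= s); [|lra]. apply Hlub; intros u Pu.
      destruct (Rle_or_lt u s); auto. exfalso; apply Hn; eauto. }
  assert (Hqa : a < q).
  { pose proof (Hub _ HPm). assert (a < Rmin (a+e) b) by (apply Rmin_glb_lt; lra). lra. }
  assert (Hqb : q <= b) by (apply Hlub; intros u [Hu _]; lra).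
  assert (Hgt : forall u, q < u -> ~ P u) by (intros u Hu Pu; pose proof (Hub u Pu); lra).
  destruct (Rle_lt_or_eq_dec q b Hqb) as [Hqb'|Hqb'].
  2: { intros s Hs; apply Hbelow; lra. }
  exfalso.
  destruct (Hloc q (conj Hqa Hqb')) as [HBq | [d [a1 [m1 [a2 [m2 [Hd Haff]]]]]]].
  - pose proof (HB q (conj Hqa Hqb') HBq) as Hxq.
    destruct (Rlt_or_le q (x q)) as [Hlt|Hle].
    + apply (Hgt (Rmin (x q) b)).
      { apply Rmin_glb_lt; lra. }
      split; [split; [apply Rmin_glb_lt; lra | apply Rmin_r] |].
      intros s Hs. pose proof (Rmin_l (x q) b) as Hm1. pose proof (Rmin_r (x q) b) as Hm2.
      destruct (Honto s ltac:(lra)) as [w [Hw Hxw]].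
      assert (Hwq : w < q).
      { destruct (Rlt_or_le w q) as [H0|H0]; auto. exfalso.
        destruct (Rle_lt_or_eq_dec q w H0) as [H'|H'].
        - pose proof (Hmono q w ltac:(lra) H' ltac:(lra)). lra.
        - subst w. lra. }
      assert (Hwa : a < w).
      { destruct (Rle_lt_or_eq_dec a w (proj1 Hw)) as [H'|H']; auto. subst w. lra. }
      rewrite <- Hxw. apply (Hinv w ltac:(lra)). apply Hbelow; lra.
    + assert (Hxq' : x q < q) by (destruct Hle; [auto| exfalso; auto]).
      destruct (Hxr q (conj Hqa Hqb')) as [d [l [Hd [Hl Hx]]]].
      set (del := (q - x q) / (2 * l)).
      assert (Hdel : 0 < del) by (unfold del; apply Rdiv_lt_0_compat; lra).
      assert (Hldel : l * del = (q - x q) / 2) by (unfold del; field; lra).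
      set (u := Rmin (Rmin (q + d) (q + del)) b).
      assert (Hu1 : u <= q + d) by (unfold u; pose proof (Rmin_l (Rmin (q + d) (q + del)) b); pose proof (Rmin_l (q+d) (q+del)); lra).
      assert (Hu2 : u <= q + del) by (unfold u; pose proof (Rmin_l (Rmin (q + d) (q + del)) b); pose proof (Rmin_r (q+d) (q+del)); lra).
      assert (Hu3 : u <= b) by (unfold u; apply Rmin_r).
      assert (Hu4 : q < u) by (unfold u; repeat apply Rmin_glb_lt; lra).
      apply (Hgt u Hu4). split; [lra|].
      intros s Hs. destruct (Rlt_or_le s q) as [Hsq|Hsq]; [apply Hbelow; lra|].
      apply (Hinv s ltac:(lra)).
      assert (Hxs : x s = x q + l * (s - q)) by (apply Hx; lra).
      assert (l * (s - q) < l * del) by (apply Rmult_lt_compat_l; lra).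
      assert (a < x s).
      { destruct (Rle_lt_or_eq_dec q s Hsq) as [H'|H'].
        - pose proof (Hmono a s ltac:(lra) ltac:(lra) ltac:(lra)). lra.
        - subst s. pose proof (Hmono a q ltac:(lra) ltac:(lra) ltac:(lra)). lra. }
      apply Hbelow; lra.
  - set (d' := Rmin (d/2) ((q - a)/2)).
    assert (Hd1 : 0 < d') by (unfold d'; apply Rmin_glb_lt; lra).
    assert (Hd2 : d' <= d/2) by apply Rmin_l.
    assert (Hd3 : d' <= (q-a)/2) by apply Rmin_r.
    destruct (Haff (q - d') ltac:(lra)) as [Ey1 Ez1].
    destruct (Haff (q - d'/2) ltac:(lra)) as [Ey2 Ez2].
    assert (E1 : y (q - d') = z (q - d')) by (apply Hbelow; lra).
    assert (E2 : y (q - d'/2) = z (q - d'/2)) by (apply Hbelow; lra).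
    rewrite Ey1, Ez1 in E1. rewrite Ey2, Ez2 in E2.
    destruct (aff2 a1 m1 a2 m2 (q - d') (q - d'/2) ltac:(lra) E1 E2) as [Hm Ha].
    subst m2 a2.
    apply (Hgt (Rmin (q + d/2) b)).
    { apply Rmin_glb_lt; lra. }
    split; [split; [apply Rmin_glb_lt; lra | apply Rmin_r] |].
    intros s Hs. pose proof (Rmin_l (q + d/2) b).
    destruct (Rlt_or_le s q) as [Hsq|Hsq]; [apply Hbelow; lra|].
    destruct (Haff s ltac:(lra)) as [E3 E4]. rewrite E3, E4. reflexivity.
Qed.

Lemma find_right (t : nat -> R) (q : R) :
  forall k, t 0%nat <= q -> q < t k -> exists i, (i < k)%nat /\ t i <= q < t (S i).
Proof.
  intros k. induction k as [|k IH]; intros H0 Hq.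
  - lra.
  - destruct (Rlt_or_le q (t k)) as [H|H].
    + destruct (IH H0 H) as [i [Hi1 Hi2]]. exists i; split; [lia|exact Hi2].
    + exists k; split; [lia|lra].
Qed.

Lemma find_left (t : nat -> R) (q : R) :
  forall k, t 0%nat < q -> q <= t k -> exists i, (i < k)%nat /\ t i < q <= t (S i).
Proof.
  intros k. induction k as [|k IH]; intros H0 Hq.
  - lra.
  - destruct (Rle_or_lt q (t k)) as [H|H].
    + destruct (IH H0 H) as [i [Hi1 Hi2]]. exists i; split; [lia|exact Hi2].
    + exists k; split; [lia|lra].
Qed.

Lemma pw_mono (Lam : R -> Prop) (f : R -> R) n t :
  (forall l, Lam l -> 0 < l) ->
  (forall i, (i < n)%nat -> exists l, Lam l /\ forall s, t i <= s <= t (S i) -> f s = f (t i) + l * (s - t i)) ->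
  forall k, (k <= n)%nat -> forall s u, t 0%nat <= s -> s < u -> u <= t k -> f s < f u.
Proof.
  intros Hpos Hpc k. induction k as [|k IH]; intros Hk s u Hs Hsu Hu.
  - lra.
  - destruct (Rle_or_lt u (t k)) as [H|H].
    + apply IH; auto; lia.
    + destruct (Hpc k ltac:(lia)) as [l [Hl Hf]]. pose proof (Hpos l Hl).
      assert (Hfu : f u = f (t k) + l * (u - t k)) by (apply Hf; lra).
      destruct (Rle_or_lt (t k) s) as [H2|H2].
      * assert (Hfs : f s = f (t k) + l * (s - t k)) by (apply Hf; lra).
        rewrite Hfu, Hfs. apply Rplus_lt_compat_l, Rmult_lt_compat_l; lra.
      * apply Rlt_trans with (f (t k)).
        -- apply IH; auto; try lia; lra.
        -- rewrite Hfu. assert (0 < l * (u - t k)) by (apply Rmult_lt_0_compat; lra). lra.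
Qed.

Lemma F_mono r Lam A f : (forall l, Lam l -> 0 < l) -> inF r Lam A f ->
  forall s u, 0 <= s -> s < u -> u <= r -> f s < f u.
Proof.
  intros Hpos [[n [t [H0 [Hn [Ht [HA Hpc]]]]]] _] s u H1 H2 H3.
  apply (pw_mono Lam f n t Hpos Hpc n (le_n n)); try rewrite H0; try rewrite Hn; auto.
Qed.

Lemma F_right r Lam A f : inF r Lam A f -> forall q, 0 <= q < r ->
  exists d l, 0 < d /\ Lam l /\ forall s, q <= s <= q + d -> f s = f q + l * (s - q).
Proof.
  intros [[n [t [H0 [Hn [Ht [HA Hpc]]]]]] _] q Hq.
  destruct (find_right t q n ltac:(rewrite H0; lra) ltac:(rewrite Hn; lra)) as [i [Hi Hti]].
  destruct (Hpc i Hi) as [l [Hl Hf]].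
  exists (t (S i) - q), l. split; [lra|]. split; [auto|].
  intros s Hs. rewrite (Hf s ltac:(lra)), (Hf q ltac:(lra)). ring.
Qed.

Lemma F_left r Lam A f : inF r Lam A f -> forall q, 0 < q <= r ->
  exists d l, 0 < d /\ Lam l /\ forall s, q - d <= s <= q -> f s = f q + l * (s - q).
Proof.
  intros [[n [t [H0 [Hn [Ht [HA Hpc]]]]]] _] q Hq.
  destruct (find_left t q n ltac:(rewrite H0; lra) ltac:(rewrite Hn; lra)) as [i [Hi Hti]].
  destruct (Hpc i Hi) as [l [Hl Hf]].
  exists (q - t i), l. split; [lra|]. split; [auto|].
  intros s Hs. rewrite (Hf s ltac:(lra)), (Hf q ltac:(lra)). ring.
Qed.

Lemma F_bp r Lam A f : inF r Lam A f -> forall q, 0 <= q < r ->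
  A q \/ exists d a m, 0 < d /\ forall s, q - d < s < q + d -> f s = a + m * s.
Proof.
  intros [[n [t [H0 [Hn [Ht [HA Hpc]]]]]] _] q Hq.
  destruct (find_right t q n ltac:(rewrite H0; lra) ltac:(rewrite Hn; lra)) as [i [Hi Hti]].
  destruct (Req_dec (t i) q) as [E|E].
  - left. rewrite <- E. apply (HA i ltac:(lia)).
  - right. destruct (Hpc i Hi) as [l [Hl Hf]].
    exists (Rmin (q - t i) (t (S i) - q)), (f (t i) - l * t i), l.
    split; [apply Rmin_glb_lt; lra|].
    intros s Hs. pose proof (Rmin_l (q - t i) (t (S i) - q)). pose proof (Rmin_r (q - t i) (t (S i) - q)).
    rewrite (Hf s ltac:(lra)). ring.
Qed.

Lemma F_fix_r r Lam A f : 0 < r -> (forall l, Lam l -> 0 < l) -> inF r Lam A f -> f r = r.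
Proof.
  intros Hr Hpos Hf.
  pose proof (F_mono r Lam A f Hpos Hf) as Hm.
  destruct Hf as [Hpw [Hrange [Hinj Hsurj]]].
  destruct (Rtotal_order (f r) r) as [Hlt|[Heq|Hgt]]; auto; exfalso.
  - pose proof (Hm 0 r ltac:(lra) Hr ltac:(lra)). pose proof (Hrange 0 ltac:(lra)).
    destruct (Hsurj (f r) ltac:(lra)) as [s [Hs Hfs]].
    pose proof (Hm s r ltac:(lra) ltac:(lra) ltac:(lra)). lra.
  - destruct (F_left r Lam A f (conj Hpw (conj Hrange (conj Hinj Hsurj))) r ltac:(lra)) as [d [l [Hd [Hl Hfl]]]].
    pose proof (Hpos l Hl).
    set (del := Rmin (Rmin d (r/2)) ((f r - r) / (2 * l))).
    assert (H1 : del <= d) by (unfold del; pose proof (Rmin_l (Rmin d (r/2)) ((f r - r) / (2 * l))); pose proof (Rmin_l d (r/2)); lra).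
    assert (H2 : del <= r/2) by (unfold del; pose proof (Rmin_l (Rmin d (r/2)) ((f r - r) / (2 * l))); pose proof (Rmin_r d (r/2)); lra).
    assert (H3 : del <= (f r - r) / (2 * l)) by (unfold del; apply Rmin_r).
    assert (H4 : 0 < del) by (unfold del; repeat apply Rmin_glb_lt; try lra; apply Rdiv_lt_0_compat; lra).
    assert (H5 : l * del <= l * ((f r - r) / (2 * l))) by (apply Rmult_le_compat_l; lra).
    assert (H6 : l * ((f r - r) / (2 * l)) = (f r - r) / 2) by (field; lra).
    pose proof (Hfl (r - del) ltac:(lra)).
    pose proof (Hrange (r - del) ltac:(lra)). lra.
Qed.

Lemma fix_out r Lam A a b f : inF_S r Lam A (open_int a b) f ->
  forall s, 0 <= s < r -> ~ (a < s < b) -> f s = s.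
Proof. intros [_ Hs] s H1 H2. destruct (Req_dec (f s) s); auto. exfalso. apply H2. apply (Hs s H1 H). Qed.

Lemma rslope_val r Lam A f a c m e : inF r Lam A f -> 0 <= a < r -> 0 < e ->
  (forall s, a < s < a + e -> f s = c + m * s) -> c + m * a = f a /\ Lam m.
Proof.
  intros Hf Ha He Hs.
  destruct (F_right r Lam A f Hf a Ha) as [d [l [Hd [Hl Hfl]]]].
  set (d' := Rmin d e). assert (0 < d') by (unfold d'; apply Rmin_glb_lt; lra).
  pose proof (Rmin_l d e). pose proof (Rmin_r d e). fold d' in H0, H1.
  assert (E1 : c + m * (a + d'/3) = (f a - l * a) + l * (a + d'/3)).
  { rewrite <- Hs by lra. rewrite Hfl by lra. ring. }
  assert (E2 : c + m * (a + d'/2) = (f a - l * a) + l * (a + d'/2)).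
  { rewrite <- Hs by lra. rewrite Hfl by lra. ring. }
  destruct (aff2 _ _ _ _ (a + d'/3) (a + d'/2) ltac:(lra) E1 E2) as [-> ->]. split; [ring|auto].
Qed.

Lemma lslope_val r Lam A f b c m e : inF r Lam A f -> 0 < b <= r -> 0 < e ->
  (forall s, b - e < s < b -> f s = c + m * s) -> c + m * b = f b /\ Lam m.
Proof.
  intros Hf Hb He Hs.
  destruct (F_left r Lam A f Hf b Hb) as [d [l [Hd [Hl Hfl]]]].
  set (d' := Rmin d e). assert (0 < d') by (unfold d'; apply Rmin_glb_lt; lra).
  pose proof (Rmin_l d e). pose proof (Rmin_r d e). fold d' in H0, H1.
  assert (E1 : c + m * (b - d'/2) = (f b - l * b) + l * (b - d'/2)).
  { rewrite <- Hs by lra. rewrite Hfl by lra. ring. }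
  assert (E2 : c + m * (b - d'/3) = (f b - l * b) + l * (b - d'/3)).
  { rewrite <- Hs by lra. rewrite Hfl by lra. ring. }
  destruct (aff2 _ _ _ _ (b - d'/2) (b - d'/3) ltac:(lra) E1 E2) as [-> ->]. split; [ring|auto].
Qed.

Theorem lemma4p1 (r : R) (Lam A : R -> Prop) (alpha beta : R) (x : R -> R) :
  F_params r Lam A ->
  0 <= alpha -> beta <= r -> A alpha -> A beta -> alpha < beta ->
  inF_S r Lam A (open_int alpha beta) x ->
  (forall t, open_int alpha beta t -> A t -> x t <> t) ->
  (* phi : y |-> (alpha) y'^+ *)
  ((forall y, inF_S r Lam A (open_int alpha beta) y ->
      exists l, Lam l /\ rslope y alpha l) /\
   (forall y z ly lz,
      inF_S r Lam A (open_int alpha beta) y ->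
      inF_S r Lam A (open_int alpha beta) z ->
      rslope y alpha ly -> rslope z alpha lz ->
      rslope (F_mul y z) alpha (ly * lz)) /\
   (forall y z l,
      inF_S r Lam A (open_int alpha beta) y ->
      inF_S r Lam A (open_int alpha beta) z ->
      F_eq r (F_mul x y) (F_mul y x) ->
      F_eq r (F_mul x z) (F_mul z x) ->
      rslope y alpha l -> rslope z alpha l ->
      F_eq r y z)) /\
  (* phi : y |-> (beta) y'^- *)
  ((forall y, inF_S r Lam A (open_int alpha beta) y ->
      exists l, Lam l /\ lslope y beta l) /\
   (forall y z ly lz,
      inF_S r Lam A (open_int alpha beta) y ->
      inF_S r Lam A (open_int alpha beta) z ->
      lslope y beta ly -> lslope z beta lz ->
      lslope (F_mul y z) beta (ly * lz)) /\
   (forall y z l,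
      inF_S r Lam A (open_int alpha beta) y ->
      inF_S r Lam A (open_int alpha beta) z ->
      F_eq r (F_mul x y) (F_mul y x) ->
      F_eq r (F_mul x z) (F_mul z x) ->
      lslope y beta l -> lslope z beta l ->
      F_eq r y z)).
Proof.
  intros Hpar Ha0 Hbr HAa HAb Hab Hx Hnofix.
  destruct Hpar as [Hr [[Hpos [HL1 [HLm HLi]]] [_ [HAg [HAr HLA]]]]].
  assert (Har : alpha < r) by lra.
  assert (Hb0 : 0 < beta) by lra.
  assert (fixa : forall y, inF_S r Lam A (open_int alpha beta) y -> y alpha = alpha).
  { intros y Hy. apply (fix_out r Lam A alpha beta y Hy); lra. }
  assert (fixb : forall y, inF_S r Lam A (open_int alpha beta) y -> y beta = beta).
  { intros y Hy. destruct (Rle_lt_or_eq_dec beta r Hbr) as [H|H].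
    - apply (fix_out r Lam A alpha beta y Hy); lra.
    - subst beta. apply (F_fix_r r Lam A y Hr Hpos (proj1 Hy)). }
  pose proof (proj1 Hx) as HxF.
  assert (Hmono : forall s u, alpha <= s -> s < u -> u <= beta -> x s < x u).
  { intros s u H1 H2 H3. apply (F_mono r Lam A x Hpos HxF); lra. }
  assert (Hxa := fixa x Hx). assert (Hxb := fixb x Hx).
  assert (Honto : forall v, alpha <= v <= beta -> exists u, alpha <= u <= beta /\ x u = v).
  { intros v Hv. destruct (Req_dec v beta) as [E|E].
    - exists beta. split; [lra|congruence].
    - destruct HxF as [_ [_ [_ Hsurj]]].
      destruct (Hsurj v ltac:(lra)) as [u [Hu Hxu]]. exists u. split; auto.
      split.
      + destruct (Rle_or_lt alpha u) as [H|H]; auto. exfalso.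
        pose proof (F_mono r Lam A x Hpos (proj1 Hx) u alpha ltac:(lra) H ltac:(lra)). lra.
      + destruct (Rle_or_lt u beta) as [H|H]; auto. exfalso.
        pose proof (F_mono r Lam A x Hpos (proj1 Hx) beta u ltac:(lra) H ltac:(lra)). lra. }
  assert (Hinv : forall y z, inF_S r Lam A (open_int alpha beta) y -> inF_S r Lam A (open_int alpha beta) z ->
      F_eq r (F_mul x y) (F_mul y x) -> F_eq r (F_mul x z) (F_mul z x) ->
      forall s, alpha < s < beta -> (y s = z s <-> y (x s) = z (x s))).
  { intros y z Hy Hz Hcy Hcz s Hs. unfold F_eq, F_mul in Hcy, Hcz.
    split; intro E.
    - rewrite (Hcy s ltac:(lra)), (Hcz s ltac:(lra)), E. reflexivity.
    - rewrite (Hcy s ltac:(lra)), (Hcz s ltac:(lra)) in E.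
      destruct HxF as [_ [_ [Hinj _]]].
      destruct Hy as [[_ [Hry _]] _]. destruct Hz as [[_ [Hrz _]] _].
      apply Hinj; auto; [apply Hry | apply Hrz]; lra. }
  assert (Hloc : forall y z, inF_S r Lam A (open_int alpha beta) y -> inF_S r Lam A (open_int alpha beta) z ->
      forall q, alpha < q < beta -> A q \/ exists d a1 m1 a2 m2, 0 < d /\
       forall s, q - d < s < q + d -> y s = a1 + m1 * s /\ z s = a2 + m2 * s).
  { intros y z Hy Hz q Hq.
    destruct (F_bp r Lam A y (proj1 Hy) q ltac:(lra)) as [H|[d1 [a1 [m1 [Hd1 H1]]]]]; auto.
    destruct (F_bp r Lam A z (proj1 Hz) q ltac:(lra)) as [H|[d2 [a2 [m2 [Hd2 H2]]]]]; auto.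
    right. exists (Rmin d1 d2), a1, m1, a2, m2. split; [apply Rmin_glb_lt; lra|].
    intros s Hs. pose proof (Rmin_l d1 d2). pose proof (Rmin_r d1 d2).
    split; [apply H1|apply H2]; lra. }
  assert (Hxr : forall q, alpha < q < beta -> exists d l, 0 < d /\ 0 < l /\
       forall s, q <= s <= q + d -> x s = x q + l * (s - q)).
  { intros q Hq. destruct (F_right r Lam A x HxF q ltac:(lra)) as [d [l [Hd [Hl Hf]]]].
    exists d, l. auto. }
  assert (Hxl : forall q, alpha < q < beta -> exists d l, 0 < d /\ 0 < l /\
       forall s, q - d <= s <= q -> x s = x q + l * (s - q)).
  { intros q Hq. destruct (F_left r Lam A x HxF q ltac:(lra)) as [d [l [Hd [Hl Hf]]]].
    exists d, l. auto. }
  split; [split; [|split] | split; [|split]].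
  -
    intros y Hy. destruct (F_right r Lam A y (proj1 Hy) alpha ltac:(lra)) as [d [l [Hd [Hl Hf]]]].
    exists l. split; auto. exists d, (y alpha - l * alpha). split; auto.
    intros s Hs. rewrite (Hf s ltac:(lra)). ring.
  -
    intros y z ly lz Hy Hz [ey [cy [Hey Hy']]] [ez [cz [Hez Hz']]].
    destruct (rslope_val r Lam A y alpha cy ly ey (proj1 Hy) ltac:(lra) Hey Hy') as [Ey Ly].
    destruct (rslope_val r Lam A z alpha cz lz ez (proj1 Hz) ltac:(lra) Hez Hz') as [Ez Lz].
    rewrite (fixa y Hy) in Ey. rewrite (fixa z Hz) in Ez.
    pose proof (Hpos ly Ly).
    assert (0 < ez / ly) by (apply Rdiv_lt_0_compat; lra).
    exists (Rmin ey (ez / ly)), (cz + lz * cy). split; [apply Rmin_glb_lt; lra|].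
    intros s Hs. pose proof (Rmin_l ey (ez / ly)). pose proof (Rmin_r ey (ez / ly)).
    unfold F_mul. rewrite (Hy' s ltac:(lra)).
    assert (ly * (s - alpha) < ly * (ez / ly)) by (apply Rmult_lt_compat_l; lra).
    assert (ly * (ez / ly) = ez) by (field; lra).
    assert (0 < ly * (s - alpha)) by (apply Rmult_lt_0_compat; lra).
    assert (cy + ly * s = alpha + ly * (s - alpha)) by lra.
    rewrite Hz' by lra. ring.
  -
    intros y z l Hy Hz Hcy Hcz [ey [cy [Hey Hy']]] [ez [cz [Hez Hz']]].
    destruct (rslope_val r Lam A y alpha cy l ey (proj1 Hy) ltac:(lra) Hey Hy') as [Ey _].
    destruct (rslope_val r Lam A z alpha cz l ez (proj1 Hz) ltac:(lra) Hez Hz') as [Ez _].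
    rewrite (fixa y Hy) in Ey. rewrite (fixa z Hz) in Ez.
    intros s Hs. destruct (classic (alpha < s < beta)) as [Hin|Hout].
    + apply (core alpha beta x y z A Hab Hmono Hxa Hxb Honto (Hinv y z Hy Hz Hcy Hcz)
               (fun q Hq HAq => Hnofix q Hq HAq) (Hloc y z Hy Hz) Hxr); auto.
      exists (Rmin ey ez). split; [apply Rmin_glb_lt; lra|].
      intros u Hu. pose proof (Rmin_l ey ez). pose proof (Rmin_r ey ez).
      rewrite Hy', Hz' by lra. lra.
    + rewrite (fix_out r Lam A alpha beta y Hy s Hs Hout), (fix_out r Lam A alpha beta z Hz s Hs Hout). reflexivity.
  -
    intros y Hy. destruct (F_left r Lam A y (proj1 Hy) beta ltac:(lra)) as [d [l [Hd [Hl Hf]]]].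
    exists l. split; auto. exists d, (y beta - l * beta). split; auto.
    intros s Hs. rewrite (Hf s ltac:(lra)). ring.
  -
    intros y z ly lz Hy Hz [ey [cy [Hey Hy']]] [ez [cz [Hez Hz']]].
    destruct (lslope_val r Lam A y beta cy ly ey (proj1 Hy) ltac:(lra) Hey Hy') as [Ey Ly].
    destruct (lslope_val r Lam A z beta cz lz ez (proj1 Hz) ltac:(lra) Hez Hz') as [Ez Lz].
    rewrite (fixb y Hy) in Ey. rewrite (fixb z Hz) in Ez.
    pose proof (Hpos ly Ly).
    assert (0 < ez / ly) by (apply Rdiv_lt_0_compat; lra).
    exists (Rmin ey (ez / ly)), (cz + lz * cy). split; [apply Rmin_glb_lt; lra|].
    intros s Hs. pose proof (Rmin_l ey (ez / ly)). pose proof (Rmin_r ey (ez / ly)).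
    unfold F_mul. rewrite (Hy' s ltac:(lra)).
    assert (ly * (beta - s) < ly * (ez / ly)) by (apply Rmult_lt_compat_l; lra).
    assert (ly * (ez / ly) = ez) by (field; lra).
    assert (0 < ly * (beta - s)) by (apply Rmult_lt_0_compat; lra).
    assert (cy + ly * s = beta - ly * (beta - s)) by lra.
    rewrite Hz' by lra. ring.
  -
    intros y z l Hy Hz Hcy Hcz [ey [cy [Hey Hy']]] [ez [cz [Hez Hz']]].
    destruct (lslope_val r Lam A y beta cy l ey (proj1 Hy) ltac:(lra) Hey Hy') as [Ey _].
    destruct (lslope_val r Lam A z beta cz l ez (proj1 Hz) ltac:(lra) Hez Hz') as [Ez _].
    rewrite (fixb y Hy) in Ey. rewrite (fixb z Hz) in Ez.
    intros s Hs. destruct (classic (alpha < s < beta)) as [Hin|Hout].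
    + pose proof (Hinv y z Hy Hz Hcy Hcz) as Hinv'.
      pose proof (Hloc y z Hy Hz) as Hloc'.
      assert (K : forall s, -beta < s < -alpha -> - y (- s) = - z (- s)).
      { apply (core (-beta) (-alpha) (fun s => - x (- s)) (fun s => - y (- s)) (fun s => - z (- s))
                 (fun s => A (- s))).
        - lra.
        - intros s1 u1 H1 H2 H3. apply Ropp_lt_contravar. apply Hmono; lra.
        - rewrite Ropp_involutive, Hxb. reflexivity.
        - rewrite Ropp_involutive, Hxa. reflexivity.
        - intros v Hv. destruct (Honto (- v) ltac:(lra)) as [u [Hu Hxu]].
          exists (- u). split; [lra|]. rewrite Ropp_involutive, Hxu. ring.
        - intros s1 Hs1. rewrite Ropp_involutive.
          destruct (Hinv' (- s1) ltac:(lra)) as [I1 I2]. split; intro E.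
          + assert (y (x (- s1)) = z (x (- s1))) by (apply I1; lra). lra.
          + assert (y (- s1) = z (- s1)) by (apply I2; lra). lra.
        - intros q Hq HAq E. apply (Hnofix (- q) ltac:(unfold open_int; lra) HAq). lra.
        - intros q Hq. destruct (Hloc' (- q) ltac:(lra)) as [H|[d [a1 [m1 [a2 [m2 [Hd Haf]]]]]]]; auto.
          right. exists d, (- a1), m1, (- a2), m2. split; auto.
          intros s1 Hs1. destruct (Haf (- s1) ltac:(lra)) as [E1 E2]. rewrite E1, E2. split; ring.
        - intros q Hq. destruct (Hxl (- q) ltac:(lra)) as [d [l1 [Hd [Hl1 Hf]]]].
          exists d, l1. split; auto. split; auto. intros s1 Hs1.
          rewrite (Hf (- s1) ltac:(lra)). ring.
        - exists (Rmin ey ez). split; [apply Rmin_glb_lt; lra|].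
          intros u Hu. pose proof (Rmin_l ey ez). pose proof (Rmin_r ey ez).
          rewrite Hy', Hz' by lra. lra. }
      pose proof (K (- s) ltac:(lra)) as K1. rewrite Ropp_involutive in K1. lra.
    + rewrite (fix_out r Lam A alpha beta y Hy s Hs Hout), (fix_out r Lam A alpha beta z Hz s Hs Hout). reflexivity.
Qed.
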